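(* Let $q$ be an odd positive integer and $m$ a positive integer. If $P_m$ divides $Q_q$, then $m\leq q$ and $m\mid q\cdot 2^{q-1}$.
   Context: $Q_q$ denotes the $q$-dimensional hypercube graph (vertices are $q$-tuples of $0$'s and $1$'s, adjacent iff they differ in exactly one coordinate). $P_m$ denotes the path with $m$ edges. For graphs $H$ and $G$, ''$H$ divides $G$'' means there is a collection of subgraphs $H_i$ of $G$, each isomorphic to $H$, such that $E(G)$ is the disjoint union of the edge sets $E(H_i)$. *)

(* Defs.v *)
From mathcomp Require Import all_boot.
Set Implicit Arguments. Unset Strict Implicit. Unset Printing Implicit Defensive.

(* A simple graph is a finite vertex type T with an adjacency relation e
   (assumed symmetric and irreflexive where relevant). Edges are unordered
   pairs, represented as 2-element sets {x, y}. *)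
Definition graph_edges (T : finType) (e : rel T) : {set {set T}} :=
  [set [set x; y] | x in T, y in T & e x y].

Definition cube (q : nat) : finType := {ffun 'I_q -> bool}.
Definition cube_adj (q : nat) : rel (cube q) :=
  fun x y => #|[set i : 'I_q | x i != y i]| == 1.
Arguments cube_adj q : clear implicits.

(* A subgraph of G isomorphic to P_m (the path with m edges) is given by an
   injective sequence of m+1 vertices v_0,...,v_m with consecutive vertices
   adjacent in G; its edge set is { {v_i, v_(i+1)} | i < m }. *)
Definition is_path_in (T : finType) (e : rel T) (m : nat)
    (p : {ffun 'I_m.+1 -> T}) : Prop :=
  injective p /\
  forall i : 'I_m, e (p (widen_ord (leqnSn m) i)) (p (lift ord0 i)).

Definition path_edges (T : finType) (m : nat) (p : {ffun 'I_m.+1 -> T})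
    : {set {set T}} :=
  [set [set p (widen_ord (leqnSn m) i); p (lift ord0 i)] | i : 'I_m].

(* "P_m divides G": E(G) is the disjoint union of the edge sets of a family of
   subgraphs of G each isomorphic to P_m. *)
Definition path_divides (m : nat) (T : finType) (e : rel T) : Prop :=
  exists (k : nat) (P : 'I_k -> {ffun 'I_m.+1 -> T}),
    (forall j, is_path_in e (P j)) /\
    (forall j1 j2, j1 != j2 -> [disjoint path_edges (P j1) & path_edges (P j2)]) /\
    \bigcup_(j < k) path_edges (P j) = graph_edges e.

(* Main.v *)
Require Import Defs.
From mathcomp Require Import all_boot.
From mathcomp Require Import zify.
Set Implicit Arguments. Unset Strict Implicit. Unset Printing Implicit Defensive.
Lemma odd_sum_ex (I : finType) (F : I -> nat) :
  odd (\sum_i F i) -> exists i, odd (F i).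
Proof.
move=> H; case: (boolP [exists i, odd (F i)]) => [/existsP //|Hn].
suff: ~~ odd (\sum_i F i) by rewrite H.
apply: (big_ind (fun n => ~~ odd n)) => //.
  by move=> x y /negbTE hx /negbTE hy; rewrite oddD hx hy.
move=> i _; apply/negP => hi; case/negP: Hn; apply/existsP; by exists i.
Qed.

Lemma card_ind (T : finType) (A : {set T}) : #|A| = \sum_x (x \in A : nat).
Proof. by rewrite -sum1_card big_mkcond. Qed.

Lemma card_disj_bigcup (T : finType) k (S : 'I_k -> {set T}) (B : {set T}) :
  (forall j1 j2, j1 != j2 -> [disjoint S j1 & S j2]) ->
  #|B :&: \bigcup_(j < k) S j| = \sum_(j < k) #|S j :&: B|.
Proof.
move=> Hd.
rewrite card_ind (eq_bigr (fun j => \sum_x (x \in S j :&: B : nat))); last first.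
  by move=> j _; rewrite card_ind.
rewrite exchange_big /=.
apply: eq_bigr => x _.
rewrite inE; case: (boolP (x \in B)) => xB /=; last first.
  by rewrite big1 // => j _; rewrite inE (negbTE xB) andbF.
case: (boolP (x \in \bigcup_(j < k) S j)) => /=.
  case/bigcupP => j0 _ xj0.
  rewrite (bigD1 j0) //= inE xj0 xB big1 // => j nj.
  rewrite inE.
  have := Hd _ _ nj; rewrite disjoint_sym => /disjointFr /(_ xj0) ->.
  by [].
move=> Hn; rewrite big1 // => j _; rewrite inE.
case: (boolP (x \in S j)) => // xj; case/negP: Hn; apply/bigcupP; by exists j.
Qed.

Lemma par (A B N a b : nat) : N = A + b -> N = a + B -> odd (A + B) -> odd (a + b).
Proof.
move=> h1 h2 h3.
have : odd ((A + B) + (a + b)) = odd (N + N) by congr odd; lia.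
rewrite oddD addnn odd_double h3. by case: (odd (a+b)).
Qed.

Section P.
Variables (T : finType) (m : nat) (p : {ffun 'I_m.+1 -> T}).
Hypothesis pinj : injective p.

Let edge (i : 'I_m) : {set T} := [set p (widen_ord (leqnSn m) i); p (lift ord0 i)].

Lemma edge_neq i : p (widen_ord (leqnSn m) i) != p (lift ord0 i).
Proof.
apply/negP => /eqP /pinj /(congr1 val) /=; rewrite /bump leq0n /=.
lia.
Qed.

Lemma edge_inj : injective edge.
Proof.
move=> i j /setP H.
have h1 : p (widen_ord (leqnSn m) i) \in edge j by rewrite -H !inE eqxx.
have h2 : p (lift ord0 i) \in edge j by rewrite -H !inE eqxx orbT.
rewrite !inE in h1 h2.
apply/val_inj.
case/orP: h1 => /eqP /pinj /(congr1 val) /=; rewrite /bump ?leq0n /= => a;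
case/orP: h2 => /eqP /pinj /(congr1 val) /=; rewrite /bump ?leq0n /= => b; lia.
Qed.

Lemma path_card : #|path_edges p| = m.
Proof. by rewrite /path_edges card_imset ?card_ord //; apply: edge_inj. Qed.

Lemma path_odd (v : T) :
  odd #|path_edges p :&: [set e : {set T} | v \in e]| -> v = p ord0 \/ v = p ord_max.
Proof.
have ->: path_edges p :&: [set e : {set T} | v \in e] = edge @: [set i | v \in edge i].
  apply/setP => e; apply/idP/idP.
    rewrite !inE => /andP [/imsetP [i _ ->] vi].
    by apply/imsetP; exists i => //; rewrite inE.
  case/imsetP => i; rewrite inE => vi ->.
  rewrite inE; apply/andP; split; [by apply/imsetP; exists i | by rewrite inE].
rewrite card_imset; last by apply: edge_inj.
rewrite -sum1_card big_mkcond /=.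
rewrite (eq_bigr (fun i => (v == p (widen_ord (leqnSn m) i)) + (v == p (lift ord0 i)))); last first.
  move=> i _; rewrite inE /edge !inE.
  have := edge_neq i.
  move=> hne.
  case: (v =P p (widen_ord (leqnSn m) i)) => [->|h1].
    by rewrite ?eqxx (negbTE hne).
  by case: (v =P p (lift ord0 i)) => [_|h2]; rewrite ?eqxx /=.
rewrite big_split /=.
have e1 := big_ord_recr m (fun t => (v == p t) : nat).
have e2 := big_ord_recl m (fun t => (v == p t) : nat).
simpl in e1, e2.
move=> hodd.
have := par (e1 0 addn) (e2 0 addn) hodd.
by case: eqP => [->|_]; case: eqP => [->|_]; auto.
Qed.
End P.


Lemma handshake (T : finType) (E : {set {set T}}) :
  (forall e, e \in E -> #|e| = 2) ->
  \sum_v #|[set e in E | v \in e]| = 2 * #|E|.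
Proof.
move=> H2.
rewrite (eq_bigr (fun v => \sum_(e in E) (v \in e : nat))); last first.
  move=> v _; rewrite -sum1_card big_mkcond /= [RHS]big_mkcond /=.
  by apply: eq_bigr => e _; rewrite inE; case: (e \in E); case: (v \in e).
rewrite exchange_big /= (eq_bigr (fun _ => 2)); last first.
  by move=> e eE; rewrite -(H2 e eE) card_ind.
by rewrite sum_nat_const mulnC.
Qed.

Definition flip q (v : cube q) (i : 'I_q) : cube q :=
  [ffun j => if j == i then ~~ v j else v j].

Lemma flip_neq q (v : cube q) i : flip v i != v.
Proof.
apply/eqP => /ffunP /(_ i); rewrite ffunE eqxx; by case: (v i).
Qed.

Lemma adj_flip q (v : cube q) i : cube_adj q v (flip v i).
Proof.
rewrite /cube_adj; apply/cards1P; exists i; apply/setP => j.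
rewrite !inE ffunE; case: (j == i); by case: (v j).
Qed.

Lemma adj_sym q (x y : cube q) : cube_adj q x y = cube_adj q y x.
Proof.
rewrite /cube_adj; congr (_ == _); apply: eq_card => j; rewrite !inE eq_sym //.
Qed.

Lemma adj_ex q (v u : cube q) : cube_adj q v u -> exists i, u = flip v i.
Proof.
move=> /cards1P [i Hi]; exists i; apply/ffunP => j; rewrite ffunE.
move/setP: Hi => /(_ j); rewrite !inE.
case: (j =P i) => [->|_].
  by case: (v i); case: (u i).
by case: (v j); case: (u j).
Qed.

Lemma adj_neq q (x y : cube q) : cube_adj q x y -> x != y.
Proof.
move=> h; apply/eqP => exy; move: h; rewrite exy /cube_adj.
by rewrite (eq_card (B := pred0)) ?card0 // => j; rewrite !inE eqxx.
Qed.

Lemma edges_card2 q e : e \in graph_edges (cube_adj q) -> #|e| = 2.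
Proof.
case/imset2P => x y _; rewrite inE => hxy ->.
by rewrite cards2 (adj_neq hxy).
Qed.

Lemma inc_card q (v : cube q) :
  #|[set e in graph_edges (cube_adj q) | v \in e]| = q.
Proof.
have ->: [set e in graph_edges (cube_adj q) | v \in e] =
         [set [set v; flip v i] | i : 'I_q].
  apply/setP => e; apply/idP/idP.
    rewrite inE => /andP [/imset2P [x y _]]; rewrite inE => hxy -> .
    rewrite !inE => /orP [/eqP exv| /eqP eyv].
      subst x; case: (adj_ex hxy) => i ->.
      by apply/imsetP; exists i.
    subst y; rewrite adj_sym in hxy; case: (adj_ex hxy) => i ->.
    by apply/imsetP; exists i => //; rewrite setUC.
  case/imsetP => i _ ->; rewrite inE; apply/andP; split; last by rewrite !inE eqxx.
  apply/imset2P; exists v (flip v i) => //; by rewrite inE adj_flip.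
rewrite card_imset ?card_ord // => i j /setP H.
have := H (flip v i); rewrite !inE eqxx orbT (negbTE (flip_neq v i)) /=.
move/esym/eqP/ffunP/(_ i); rewrite !ffunE eqxx.
case: (i =P j) => // _; by case: (v i).
Qed.

Theorem theorem4 (q m : nat) :
  odd q -> 0 < m -> path_divides m (cube_adj q) ->
  m <= q /\ m %| q * 2 ^ (q - 1).
Proof.
move=> oq m0 [k [P [Hpath [Hdisj Hcup]]]].
set E := graph_edges (cube_adj q) in Hcup *.
have hE : #|E| = k * m.
  have := card_disj_bigcup setT Hdisj.
  rewrite setTI Hcup => ->.
  rewrite (eq_bigr (fun _ => m)); last by move=> j _; rewrite setIT path_card //; case: (Hpath j).
  by rewrite sum_nat_const card_ord.
have hcube : #|cube q| = 2 ^ q by rewrite /cube card_ffun card_bool card_ord.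
have hE2 : 2 * #|E| = q * 2 ^ q.
  rewrite -handshake; last by move=> e; apply: edges_card2.
  rewrite (eq_bigr (fun _ => q)); last by move=> v _; apply: inc_card.
  by rewrite sum_nat_const hcube mulnC.
have hend : forall v : cube q, exists j : 'I_k, exists b : bool,
    v = P j (if b then ord_max else ord0).
  move=> v.
  have := card_disj_bigcup [set e : {set cube q} | v \in e] Hdisj.
  rewrite Hcup.
  have ->: [set e : {set cube q} | v \in e] :&: E = [set e in E | v \in e].
    by apply/setP => e; rewrite !inE andbC.
  rewrite inc_card => hq.
  have oq2 := oq; rewrite [in odd q]hq in oq2; case: (odd_sum_ex oq2) => j hj.
  case: (path_odd (proj1 (Hpath j)) hj) => ->.
    by exists j, false.
  by exists j, true.
have hk : 2 ^ q <= k * 2.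
  rewrite -hcube -cardsT.
  pose g := fun x : 'I_k * bool => P x.1 (if x.2 then ord_max else ord0).
  apply: (@leq_trans #|g @: [set: 'I_k * bool]|).
    apply: subset_leq_card; apply/subsetP => v _.
    case: (hend v) => j [b ->]; by apply/imsetP; exists (j, b).
  by apply: (leq_trans (leq_imset_card _ _)); rewrite cardsT card_prod card_ord card_bool.
have hq : 2 ^ q = 2 * 2 ^ (q - 1).
  clear -oq; case: q oq => // q' _.
  by rewrite subSS subn0 expnS.
rewrite hq in hE2 hk.
set t := 2 ^ (q - 1) in hE2 hk *.
have ht : 0 < t by rewrite /t expn_gt0.
split.
  rewrite hE in hE2; nia.
have -> : q * t = k * m by lia.
by apply: dvdn_mull.
Qed.
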